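(* Every Ricci-flat trajectory (as defined in the context) satisfies $(X_1,\dots,X_r,Y_2,\dots,Y_r)(s)\to E$ as $s\to+\infty$, where $E$ is the point with $X_1=0$, $X_i=\frac{\sqrt{d_i}}{n-1}$ and $Y_i=\sqrt{\frac{n-2}{\lambda_i}}\,\frac{\sqrt{d_i}}{n-1}$ for $i=2,\dots,r$.
   Context: Fix $r\ge2$, $d_1=1$, $\lambda_1=0$, and integers $d_i\ge2$ and reals $\lambda_i>0$ for $i=2,\dots,r$; $n=\sum_id_i$. Consider the ODE system, with $'=d/ds$ and $\mathcal G=\sum_{j=1}^rX_j^2$: $X_i'=X_i(\mathcal G-1)+\frac{\lambda_iY_i^2}{\sqrt{d_i}}$, $Y_i'=Y_i\big(\mathcal G-\frac{X_i}{\sqrt{d_i}}\big)$, $i=1,\dots,r$. Let $\mathcal L=\sum_iX_i^2+\sum_i\lambda_iY_i^2-1$, $\mathcal H=\sum_i\sqrt{d_i}X_i$, and $P_0$ the point $X_1=Y_1=1$, $X_i=Y_i=0$ ($i\ge2$). A Ricci-flat trajectory is a non-constant solution defined for all $s\in\mathbb R$ with $\gamma(s)\to P_0$ as $s\to-\infty$, contained in $\{\mathcal L=0,\mathcal H=1\}$, and with $Y_i(s)>0$ for all $i$ and $s$. *)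

(* Defs.v *)
From Stdlib Require Import Reals List.
From Coquelicot Require Import Coquelicot.
Import ListNotations.
Open Scope R_scope.

(* Indices are 0-based: paper's index i (1 <= i <= r) is index i-1 here,
   so the special index (d_1 = 1, lambda_1 = 0) is index 0. *)

Definition sumr (r : nat) (f : nat -> R) : R :=
  fold_right Rplus 0 (map f (seq 0 r)).

Definition nsum (r : nat) (d : nat -> nat) : nat :=
  fold_right Nat.add 0%nat (map d (seq 0 r)).

Definition Gfun (r : nat) (X : nat -> R -> R) (s : R) : R :=
  sumr r (fun j => (X j s) ^ 2).

Definition solves_system (r : nat) (d : nat -> nat) (lam : nat -> R)
  (X Y : nat -> R -> R) : Prop :=
  forall i s, (i < r)%nat ->
    is_derive (X i) s
      (X i s * (Gfun r X s - 1) + lam i * (Y i s) ^ 2 / sqrt (INR (d i)))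
    /\ is_derive (Y i) s
      (Y i s * (Gfun r X s - X i s / sqrt (INR (d i)))).

Definition Lfun (r : nat) (lam : nat -> R) (X Y : nat -> R -> R) (s : R) : R :=
  sumr r (fun i => (X i s) ^ 2) + sumr r (fun i => lam i * (Y i s) ^ 2) - 1.

Definition Hfun (r : nat) (d : nat -> nat) (X : nat -> R -> R) (s : R) : R :=
  sumr r (fun i => sqrt (INR (d i)) * X i s).

Definition RicciFlatTrajectory (r : nat) (d : nat -> nat) (lam : nat -> R)
  (X Y : nat -> R -> R) : Prop :=
  solves_system r d lam X Y /\
  (exists i s1 s2, (i < r)%nat /\ (X i s1 <> X i s2 \/ Y i s1 <> Y i s2)) /\
  (forall i, (i < r)%nat ->
     is_lim (X i) m_infty (Finite (if Nat.eqb i 0 then 1 else 0)) /\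
     is_lim (Y i) m_infty (Finite (if Nat.eqb i 0 then 1 else 0))) /\
  (forall s, Lfun r lam X Y s = 0 /\ Hfun r d X s = 1) /\
  (forall i s, (i < r)%nat -> 0 < Y i s).

(* Main.v *)
Require Import Defs.
From Stdlib Require Import Reals.
From Coquelicot Require Import Coquelicot.
From Stdlib Require Import Reals Lra Lia List Classical Lia List.
From Coquelicot Require Import Coquelicot.
Open Scope R_scope.
Definition SL (l : list nat) (f : nat -> R) : R := fold_right Rplus 0 (map f l).

Lemma sumr_S r f : sumr r f = SL (seq 0 r) f.
Proof. reflexivity. Qed.

Lemma SL_plus l f g : SL l (fun i => f i + g i) = SL l f + SL l g.
Proof. unfold SL; induction l; simpl; [lra|]. rewrite IHl; lra. Qed.

Lemma SL_scal l c f : SL l (fun i => c * f i) = c * SL l f.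
Proof. induction l; simpl; unfold SL in *; simpl; [lra|]. rewrite IHl; lra. Qed.

Lemma SL_ext l f g : (forall i, In i l -> f i = g i) -> SL l f = SL l g.
Proof. induction l; intros H; unfold SL in *; simpl; [lra|].
 rewrite H by (left; auto). rewrite IHl; auto. intros; apply H; right; auto. Qed.

Lemma SL_le l f g : (forall i, In i l -> f i <= g i) -> SL l f <= SL l g.
Proof. induction l; intros H; unfold SL in *; simpl; [lra|].
 assert (f a <= g a) by (apply H; left; auto).
 assert (fold_right Rplus 0 (map f l) <= fold_right Rplus 0 (map g l)) by (apply IHl; intros; apply H; right; auto). lra. Qed.

Lemma SL_const l c : SL l (fun _ => c) = INR (length l) * c.
Proof. induction l; unfold SL in *; simpl; [lra|]. rewrite IHl. destruct (length l); simpl; lra. Qed.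

Lemma SL_nonneg l f : (forall i, In i l -> 0 <= f i) -> 0 <= SL l f.
Proof. intros H. replace 0 with (SL l (fun _ => 0)). apply SL_le; auto.
 rewrite SL_const; lra. Qed.

Lemma SL_single l f j : In j l -> (forall i, In i l -> 0 <= f i) -> f j <= SL l f.
Proof. induction l; intros Hj H; simpl in Hj; [contradiction|]. unfold SL; simpl.
 assert (0 <= fold_right Rplus 0 (map f l)) by (apply (SL_nonneg l f); intros; apply H; right; auto).
 destruct Hj as [<-|Hj]. assert (0 <= f a) by (apply H; left; auto). lra.
 assert (0 <= f a) by (apply H; left; auto).
 assert (f j <= SL l f) by (apply IHl; auto; intros; apply H; right; auto). unfold SL in *. lra. Qed.

Lemma SL_derive l (F dF : nat -> R -> R) s :
  (forall i, In i l -> is_derive (F i) s (dF i s)) ->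
  is_derive (fun t => SL l (fun i => F i t)) s (SL l (fun i => dF i s)).
Proof. induction l; intros H; unfold SL in *; simpl.
 - apply (is_derive_const 0 s).
 - apply (is_derive_plus (fun t => F a t) (fun t => fold_right Rplus 0 (map (fun i => F i t) l))).
   apply H; left; auto. apply IHl; intros; apply H; right; auto. Qed.

Lemma sumr_split0 r f : (1 <= r)%nat ->
  sumr r f = f 0%nat + sumr r (fun i => if Nat.eqb i 0 then 0 else f i).
Proof. intros Hr. destruct r; [lia|]. unfold sumr. simpl.
 replace (fold_right Rplus 0 (map (fun i => if Nat.eqb i 0 then 0 else f i) (seq 1 r)))
  with (fold_right Rplus 0 (map f (seq 1 r))). lra.
 apply (SL_ext (seq 1 r)). intros i Hi. apply in_seq in Hi. destruct (Nat.eqb_spec i 0); [lia|auto]. Qed.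

Lemma nsum_sumr r d : INR (nsum r d) = sumr r (fun i => INR (d i)).
Proof. unfold nsum, sumr. induction (seq 0 r); simpl; auto. rewrite plus_INR, IHl; auto. Qed.

Lemma sumr_In r i : (i < r)%nat -> In i (seq 0 r).
Proof. intros; apply in_seq; lia. Qed.

Lemma der_cont f df x : is_derive f x df -> continuity_pt f x.
Proof. intros H. apply continuity_pt_filterlim. apply (ex_derive_continuous f x). exists df; auto. Qed.

Lemma mvt f df a b : (forall t, is_derive f t (df t)) -> a <= b ->
  exists c, a <= c <= b /\ f b - f a = df c * (b - a).
Proof. intros H Hab. destruct (MVT_gen f a b df) as [c [Hc E]].
 intros; apply H. intros; eapply der_cont; apply H.
 exists c. rewrite Rmin_left, Rmax_right in Hc by lra. split; auto. Qed.

Lemma mono f df a b : (forall t, is_derive f t (df t)) -> (forall t, a <= t <= b -> 0 <= df t) -> a <= b -> f a <= f b.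
Proof. intros H Hp Hab. destruct (mvt f df a b H Hab) as [c [Hc E]].
 assert (0 <= df c) by (apply Hp; lra). nra. Qed.

Lemma lip f df B a b : (forall t, is_derive f t (df t)) -> (forall t, Rabs (df t) <= B) ->
  Rabs (f b - f a) <= B * Rabs (b - a).
Proof. intros H HB. destruct (Rle_dec a b) as [Hab|Hab].
 - destruct (mvt f df a b H Hab) as [c [Hc E]]. rewrite E, Rabs_mult.
   apply Rmult_le_compat_r; auto. apply Rabs_pos.
 - destruct (mvt f df b a H) as [c [Hc E]]; [lra|].
   rewrite <- Rabs_Ropp. replace (- (f b - f a)) with (f a - f b) by ring.
   rewrite <- (Rabs_Ropp (b - a)). replace (- (b - a)) with (a - b) by ring.
   rewrite E, Rabs_mult. apply Rmult_le_compat_r; auto. apply Rabs_pos. Qed.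

Lemma lipI f df B a b : (forall t, is_derive f t (df t)) -> (forall t, a <= t <= b -> Rabs (df t) <= B) -> a <= b ->
  Rabs (f b - f a) <= B * (b - a).
Proof. intros H HB Hab. destruct (mvt f df a b H Hab) as [c [Hc E]]. rewrite E, Rabs_mult.
 rewrite (Rabs_right (b - a)) by lra. apply Rmult_le_compat_r; [lra|]. apply HB; lra. Qed.

Definition conv (f : R -> R) (l : R) :=
  forall eps, 0 < eps -> exists S, forall s, S <= s -> Rabs (f s - l) < eps.

Lemma conv_is_lim f (l : R) : conv f l -> is_lim f p_infty l.
Proof. intros H. apply is_lim_spec. intros eps. destruct (H eps (cond_pos eps)) as [S HS].
 exists S. intros; apply HS; lra. Qed.

Lemma is_lim_conv f (l : R) : is_lim f p_infty l -> conv f l.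
Proof. intros H eps Heps. apply is_lim_spec in H. unfold is_lim' in H. destruct (H (mkposreal eps Heps)) as [S HS].
 exists (S + 1). intros s Hs. apply (HS s). lra. Qed.

Lemma barbalat f g g2 B l : (forall t, is_derive f t (g t)) -> (forall t, is_derive g t (g2 t)) ->
  (forall t, 0 <= t -> Rabs (g2 t) <= B) -> conv f l -> conv g 0.
Proof. intros Hf Hg HB Hc eps Heps.
 assert (HB0 : 0 <= B) by (specialize (HB 0 (Rle_refl 0)); pose proof (Rabs_pos (g2 0)); lra).
 set (h := eps / (2 * (B + 1))).
 assert (Hh : 0 < h) by (unfold h; apply Rdiv_lt_0_compat; lra).
 assert (HBh : B * h < eps / 2).
 { unfold h. apply Rlt_le_trans with ((B+1) * (eps / (2 * (B + 1)))).
   apply Rmult_lt_compat_r; [|lra]. apply Rdiv_lt_0_compat; lra.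
   right; field; lra. }
 destruct (Hc (eps * h / 8)) as [S HS]. apply Rdiv_lt_0_compat; [nra|lra].
 exists (Rmax S 0). intros s Hs0. pose proof (Rmax_l S 0). pose proof (Rmax_r S 0).
 assert (Hs : S <= s) by lra. rewrite Rminus_0_r. apply Rnot_le_lt. intros Hge.
 destruct (mvt f g s (s + h) Hf) as [c [Hc' E]]; [lra|].
 pose proof (lipI g g2 B s c Hg ltac:(intros; apply HB; lra) ltac:(lra)) as L.
 assert (B * (c - s) <= B * h) by (apply Rmult_le_compat_l; lra).
 assert (Hgc : eps / 2 <= Rabs (g c)).
 { pose proof (Rabs_triang_inv (g s) (g c)). rewrite <- Rabs_Ropp in L.
   replace (- (g c - g s)) with (g s - g c) in L by ring. lra. }
 assert (Hd : eps / 2 * h <= Rabs (f (s + h) - f s)).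
 { rewrite E, Rabs_mult. replace (s + h - s) with h by ring. rewrite (Rabs_right h) by lra.
   apply Rmult_le_compat_r; lra. }
 pose proof (HS s Hs) as T1. pose proof (HS (s + h) ltac:(lra)) as T2.
 pose proof (Rabs_triang (f (s + h) - l) (l - f s)) as T3.
 replace (f (s + h) - l + (l - f s)) with (f (s + h) - f s) in T3 by ring.
 rewrite <- (Rabs_Ropp (l - f s)) in T3. replace (- (l - f s)) with (f s - l) in T3 by ring.
 nra. Qed.

Lemma mono_conv f U : (forall a b, 0 <= a <= b -> f a <= f b) -> (forall s, 0 <= s -> f s <= U) ->
  exists l, conv f l.
Proof. intros Hm Hb.
 destruct (completeness (fun y => exists s, 0 <= s /\ y = f s)) as [l [Hub Hlub]].
 - exists U. intros y [s [Hs ->]]. auto.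
 - exists (f 0), 0. split; lra.
 - exists l. intros eps Heps.
   assert (exists s, 0 <= s /\ l - eps < f s).
   { apply NNPP. intros Hn. assert (l <= l - eps); [|lra]. apply Hlub.
     intros y [s [Hs ->]]. apply Rnot_lt_le. intros Hlt. apply Hn. exists s; auto. }
   destruct H as [s0 [Hs0 Hl]]. exists s0. intros s Hs.
   assert (f s <= l) by (apply Hub; exists s; split; lra).
   assert (f s0 <= f s) by (apply Hm; lra).
   rewrite Rabs_left1 by lra. lra. Qed.
Lemma deq (f : R -> R) (x a b : R) : is_derive f x a -> a = b -> is_derive f x b.
Proof. intros H ->; auto. Qed.
Lemma dplus (f g : R -> R) (x a b : R) : is_derive f x a -> is_derive g x b -> is_derive (fun t => f t + g t) x (a + b).
Proof. intros; apply (is_derive_plus f g); auto. Qed.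
Lemma dmult (f g : R -> R) (x a b : R) : is_derive f x a -> is_derive g x b -> is_derive (fun t => f t * g t) x (a * g x + f x * b).
Proof. intros H1 H2. apply (is_derive_mult f g x a b H1 H2). intros; apply Rmult_comm. Qed.
Lemma dconst (c x : R) : is_derive (fun _ => c) x 0.
Proof. apply (is_derive_const c x). Qed.
Lemma dscal (f : R -> R) (x c a : R) : is_derive f x a -> is_derive (fun t => c * f t) x (c * a).
Proof. apply is_derive_scal. Qed.

Lemma conv_lim (f : R -> R) (l : R) : conv f l <-> is_lim f p_infty l.
Proof. split; [apply conv_is_lim|apply is_lim_conv]. Qed.
Lemma conv_plus f g a b : conv f a -> conv g b -> conv (fun s => f s + g s) (a + b).
Proof. rewrite !conv_lim. intros; apply is_lim_plus'; auto. Qed.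
Lemma conv_mult f g a b : conv f a -> conv g b -> conv (fun s => f s * g s) (a * b).
Proof. rewrite !conv_lim. intros H1 H2. apply (is_lim_mult f g p_infty a b H1 H2). exact I. Qed.
Lemma conv_const c : conv (fun _ => c) c.
Proof. intros e He; exists 0; intros; rewrite Rminus_diag, Rabs_R0; auto. Qed.
Lemma conv_ext f g l : (forall s, 0 <= s -> f s = g s) -> conv f l -> conv g l.
Proof. intros E H e He. destruct (H e He) as [S HS]. exists (Rmax S 0). intros s Hs.
 rewrite <- E by (pose proof (Rmax_r S 0); lra). apply HS. pose proof (Rmax_l S 0); lra. Qed.
Lemma conv_eq f l l' : conv f l -> l = l' -> conv f l'.
Proof. intros H ->; auto. Qed.
Lemma conv_squeeze0 f g : (forall s, 0 <= s -> Rabs (f s) <= g s) -> conv g 0 -> conv f 0.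
Proof. intros E H e He. destruct (H e He) as [S HS]. exists (Rmax S 0). intros s Hs.
 pose proof (Rmax_l S 0); pose proof (Rmax_r S 0).
 specialize (HS s ltac:(lra)). specialize (E s ltac:(lra)). rewrite Rminus_0_r in *.
 pose proof (Rle_abs (g s)). lra. Qed.
Lemma conv_sq0 f g : (forall s, 0 <= s -> f s ^ 2 <= g s) -> conv g 0 -> conv f 0.
Proof. intros E H e He. destruct (H (e*e)) as [S HS]. nra. exists (Rmax S 0). intros s Hs.
 pose proof (Rmax_l S 0); pose proof (Rmax_r S 0).
 specialize (HS s ltac:(lra)). specialize (E s ltac:(lra)). rewrite Rminus_0_r in *.
 pose proof (Rle_abs (g s)). apply Rnot_le_lt; intros Hn.
 assert (e * e <= Rabs (f s) * Rabs (f s)) by (apply Rmult_le_compat; lra).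
 rewrite <- Rabs_mult in H3. replace (f s * f s) with (f s ^ 2) in H3 by ring.
 rewrite Rabs_right in H3 by (apply Rle_ge; apply pow2_ge_0). lra. Qed.
Lemma conv_sqrt f l : 0 <= l -> conv f l -> conv (fun s => sqrt (f s)) (sqrt l).
Proof. rewrite !conv_lim. intros Hl H. unfold is_lim. eapply filterlim_comp. apply H.
 apply continuity_pt_filterlim. apply continuity_pt_sqrt; auto. Qed.
Lemma dext (f g : R -> R) (x l : R) : (forall t : R, f t = g t) -> is_derive f x l -> is_derive g x l.
Proof. intros H; apply is_derive_ext; auto. Qed.
Lemma abs_div_le z b : 1 <= b -> Rabs (z / b) <= Rabs z.
Proof. intros Hb. unfold Rdiv. rewrite Rabs_mult, Rabs_inv, (Rabs_right b) by lra.
 pose proof (Rabs_pos z). assert (0 < / b <= 1). split. apply Rinv_0_lt_compat; lra.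
 rewrite <- Rinv_1. apply Rinv_le_contravar; lra. nra. Qed.

Lemma div_le1 a b : 0 <= a -> 1 <= b -> a / b <= a.
Proof. intros. unfold Rdiv. assert (0 < / b <= 1). split. apply Rinv_0_lt_compat; lra.
 rewrite <- Rinv_1. apply Rinv_le_contravar; lra. nra. Qed.

Lemma abs_mult_le a b A B : Rabs a <= A -> Rabs b <= B -> Rabs (a * b) <= A * B.
Proof. intros. rewrite Rabs_mult. apply Rmult_le_compat; auto; apply Rabs_pos. Qed.

Theorem theorem4p5 (r : nat) (d : nat -> nat) (lam : nat -> R)
  (X Y : nat -> R -> R) :
  (2 <= r)%nat ->
  d 0%nat = 1%nat ->
  lam 0%nat = 0 ->
  (forall i, (1 <= i < r)%nat -> (2 <= d i)%nat) ->
  (forall i, (1 <= i < r)%nat -> 0 < lam i) ->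
  RicciFlatTrajectory r d lam X Y ->
  is_lim (X 0%nat) p_infty (Finite 0) /\
  (forall i, (1 <= i < r)%nat ->
     is_lim (X i) p_infty
       (Finite (sqrt (INR (d i)) / (INR (nsum r d) - 1))) /\
     is_lim (Y i) p_infty
       (Finite (sqrt ((INR (nsum r d) - 2) / lam i)
                * (sqrt (INR (d i)) / (INR (nsum r d) - 1))))).
Proof.
  intros Hr Hd0 Hl0 Hd Hlam [Hsys [_ [_ [HLH HY]]]].
  set (n := INR (nsum r d)).
  set (G := Gfun r X).
  set (c := fun i => if Nat.eqb i 0 then 0 else INR (d i)).
  assert (Hr1 : (1 < r)%nat) by lia.
  assert (Hn : n = 1 + sumr r c).
  { unfold n. rewrite nsum_sumr, (sumr_split0 r) by lia. rewrite Hd0. simpl. reflexivity. }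
  assert (Hc1 : 2 <= c 1%nat).
  { unfold c. simpl. replace 2 with (INR 2) by (simpl; lra). apply le_INR. apply Hd; lia. }
  assert (Hc0 : forall i, 0 <= c i).
  { intros i; unfold c. destruct (Nat.eqb i 0); [lra|apply pos_INR]. }
  assert (Hn3 : 3 <= n).
  { rewrite Hn. assert (c 1%nat <= sumr r c). apply SL_single. apply sumr_In; lia.
    intros; auto. lra. }
  assert (Hsd0 : sqrt (INR (d 0%nat)) = 1) by (rewrite Hd0; simpl; apply sqrt_1).
  assert (Hsd : forall i, (1 <= i < r)%nat -> 4/3 <= sqrt (INR (d i)) /\ sqrt (INR (d i)) * sqrt (INR (d i)) = INR (d i)).
  { intros i Hi. assert (2 <= INR (d i)) by (replace 2 with (INR 2) by (simpl; lra); apply le_INR; apply Hd; lia).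
    pose proof (sqrt_sqrt (INR (d i)) ltac:(lra)). pose proof (sqrt_pos (INR (d i))). split; [nra|auto]. }
  assert (HW : forall s, 0 <= sumr r (fun i => lam i * Y i s ^ 2)).
  { intros s. apply SL_nonneg. intros i Hi. apply in_seq in Hi. destruct i. rewrite Hl0; lra.
    pose proof (Hlam (S i) ltac:(lia)). nra. }
  assert (HG1 : forall s, G s = 1 - sumr r (fun i => lam i * Y i s ^ 2)).
  { intros s. destruct (HLH s) as [HL _]. unfold Lfun in HL. unfold G, Gfun. lra. }
  assert (HG : forall s, 0 <= G s <= 1).
  { intros s. split. unfold G, Gfun. apply SL_nonneg; intros; apply pow2_ge_0. rewrite HG1. pose proof (HW s); lra. }
  assert (HX2 : forall i s, (i < r)%nat -> X i s ^ 2 <= G s).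
  { intros i s Hi. unfold G, Gfun. apply (SL_single _ (fun j => X j s ^ 2)). apply sumr_In; auto.
    intros; apply pow2_ge_0. }
  assert (HXb : forall i s, (i < r)%nat -> Rabs (X i s) <= 1).
  { intros i s Hi. pose proof (HX2 i s Hi). pose proof (HG s). rewrite <- (pow2_abs (X i s)) in H.
    pose proof (Rabs_pos (X i s)). nra. }
  assert (HYb : forall i s, (1 <= i < r)%nat -> lam i * Y i s ^ 2 <= 1 - G s).
  { intros i s Hi. rewrite HG1. ring_simplify. apply (SL_single _ (fun j => lam j * Y j s ^ 2)). apply sumr_In; lia.
    intros j Hj. apply in_seq in Hj. destruct j. rewrite Hl0; lra.
    pose proof (Hlam (S j) ltac:(lia)). nra. }
  assert (HH : forall s, X 0%nat s + sumr r (fun i => if Nat.eqb i 0 then 0 else sqrt (INR (d i)) * X i s) = 1).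
  { intros s. destruct (HLH s) as [_ HHs]. unfold Hfun in HHs. rewrite (sumr_split0 r) in HHs by lia.
    rewrite Hsd0 in HHs. lra. }
  set (dX := fun i s => X i s * (G s - 1) + lam i * Y i s ^ 2 / sqrt (INR (d i))).
  set (dY := fun i s => Y i s * (G s - X i s / sqrt (INR (d i)))).
  assert (HdX : forall i s, (i < r)%nat -> is_derive (X i) s (dX i s)).
  { intros i s Hi. apply (Hsys i s Hi). }
  assert (HdY : forall i s, (i < r)%nat -> is_derive (Y i) s (dY i s)).
  { intros i s Hi. apply (Hsys i s Hi). }
  assert (HdX0 : forall s, dX 0%nat s = X 0%nat s * (G s - 1)).
  { intros s. unfold dX. rewrite Hl0. unfold Rdiv. ring. }
  assert (HdXb : forall i s, (i < r)%nat -> Rabs (dX i s) <= 2).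
  { intros i s Hi. destruct (Nat.eq_dec i 0) as [->|Hi0].
    - rewrite HdX0. pose proof (HG s). pose proof (HXb 0%nat s Hi).
      apply Rle_trans with (1 * 1). apply abs_mult_le; auto. rewrite Rabs_left1; lra. lra.
    - unfold dX. eapply Rle_trans. apply Rabs_triang.
      pose proof (HG s). pose proof (HXb i s Hi).
      assert (Rabs (X i s * (G s - 1)) <= 1 * 1) by (apply abs_mult_le; auto; rewrite Rabs_left1; lra).
      pose proof (Hsd i ltac:(lia)) as [Hs1 _]. pose proof (HYb i s ltac:(lia)).
      pose proof (Hlam i ltac:(lia)).
      assert (0 <= lam i * Y i s ^ 2) by nra.
      pose proof (div_le1 (lam i * Y i s ^ 2) (sqrt (INR (d i))) H4 ltac:(lra)).
      assert (0 <= lam i * Y i s ^ 2 / sqrt (INR (d i))) by (apply Rdiv_le_0_compat; lra).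
      rewrite (Rabs_right (lam i * Y i s ^ 2 / sqrt (INR (d i)))) by lra. lra. }
  set (dG := fun s => sumr r (fun j => 2 * X j s * dX j s)).
  assert (HdG : forall s, is_derive G s (dG s)).
  { intros s. unfold G, Gfun, dG. rewrite !sumr_S.
    apply (SL_derive (seq 0 r) (fun j t => X j t ^ 2) (fun j s => 2 * X j s * dX j s)).
    intros j Hj. apply in_seq in Hj. eapply deq. apply is_derive_pow. apply HdX; lia. simpl; ring. }
  assert (HdGb : forall s, Rabs (dG s) <= 4 * INR r).
  { intros s. apply Rabs_le. unfold dG. rewrite sumr_S.
    assert (Hb : forall j, In j (seq 0 r) -> -4 <= 2 * X j s * dX j s <= 4).
    { intros j Hj. apply in_seq in Hj. pose proof (HXb j s ltac:(lia)). pose proof (HdXb j s ltac:(lia)).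
      assert (Rabs (X j s * dX j s) <= 1 * 2) by (apply abs_mult_le; auto).
      apply Rabs_le_between in H1. lra. }
    split.
    - replace (- (4 * INR r)) with (SL (seq 0 r) (fun _ => -4)).
      apply SL_le; intros; apply Hb; auto. rewrite SL_const, seq_length; ring.
    - replace (4 * INR r) with (SL (seq 0 r) (fun _ => 4)).
      apply SL_le; intros; apply Hb; auto. rewrite SL_const, seq_length; ring. }
  assert (Hexp : forall a t, is_derive (fun t => exp (a * t)) t (a * exp (a * t))).
  { intros a t. auto_derive; auto. ring. }
  set (q := fun t => X 0%nat t ^ 2 * / (Y 1%nat t ^ 2) * exp (1/2 * t)).
  assert (Hq : forall t, 0 <= t -> q t <= q 0).
  { intros t Ht.
    set (qd := fun t => - (X 0%nat t ^ 2 * / (Y 1%nat t ^ 2) * exp (1/2 * t) * (-3/2 + 2 * (X 1%nat t / sqrt (INR (d 1%nat)))))).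
    assert (Hqd : forall t, is_derive (fun t => - q t) t (qd t)).
    { intros u. pose proof (HY 1%nat u ltac:(lia)) as Y1p.
      pose proof (Hsd 1%nat ltac:(lia)) as [Hs1 _].
      assert (D1 := is_derive_pow (X 0%nat) 2 u _ (HdX 0%nat u ltac:(lia))).
      assert (D2 := is_derive_inv (fun t => Y 1%nat t ^ 2) u _ (is_derive_pow (Y 1%nat) 2 u _ (HdY 1%nat u ltac:(lia)))
                    ltac:(simpl; nra)).
      assert (D3 := dmult _ _ u _ _ (dmult _ _ u _ _ D1 D2) (Hexp (1/2) u)).
      assert (D4 := dscal _ u (-1) _ D3).
      eapply deq. eapply is_derive_ext; [|apply D4]. intros w; cbv beta. unfold q. lra.
      unfold qd. rewrite HdX0. unfold dY. simpl. field. split; lra. }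
    assert (- q 0 <= - q t).
    { apply (mono _ qd 0 t Hqd); auto. intros u Hu. unfold qd.
      pose proof (HY 1%nat u ltac:(lia)) as Y1p.
      pose proof (Hsd 1%nat ltac:(lia)) as [Hs1 _].
      pose proof (HXb 1%nat u ltac:(lia)). apply Rabs_le_between in H.
      assert (Hz : X 1%nat u / sqrt (INR (d 1%nat)) * sqrt (INR (d 1%nat)) = X 1%nat u) by (field; lra).
      assert (X 1%nat u / sqrt (INR (d 1%nat)) <= 3/4) by nra.
      assert (0 <= X 0%nat u ^ 2 * / Y 1%nat u ^ 2 * exp (1 / 2 * u)).
      { apply Rmult_le_pos. apply Rmult_le_pos. apply pow2_ge_0. left; apply Rinv_0_lt_compat; nra.
        left; apply exp_pos. }
      nra. }
    lra. }
  assert (Hq0 : 0 <= q 0).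
  { unfold q. apply Rmult_le_pos. apply Rmult_le_pos. apply pow2_ge_0.
    left; apply Rinv_0_lt_compat; pose proof (HY 1%nat 0 ltac:(lia)); nra. left; apply exp_pos. }
  assert (Hl1 : 0 < lam 1%nat) by (apply Hlam; lia).
  set (K := sqrt (q 0 / lam 1%nat)).
  assert (HK : 0 <= K) by apply sqrt_pos.
  assert (HX0 : forall s, 0 <= s -> Rabs (X 0%nat s) <= K * exp (-1/4 * s)).
  { intros s Hs. pose proof (Hq s Hs) as Hqs. unfold q in Hqs.
    pose proof (HY 1%nat s ltac:(lia)) as Y1p.
    assert (E1 : exp (1/2 * s) * exp (-1/4 * s) ^ 2 = 1).
    { simpl. rewrite Rmult_1_r, <- !exp_plus. match goal with |- exp ?a = 1 => replace a with 0 by lra end. apply exp_0. }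
    assert (E2 : X 0%nat s ^ 2 = X 0%nat s ^ 2 * / Y 1%nat s ^ 2 * exp (1 / 2 * s) * (Y 1%nat s ^ 2 * exp (-1/4 * s) ^ 2)).
    { transitivity (X 0%nat s ^ 2 * (/ Y 1%nat s ^ 2 * Y 1%nat s ^ 2) * (exp (1 / 2 * s) * exp (-1 / 4 * s) ^ 2)).
      rewrite Rinv_l by (apply pow_nonzero; lra). rewrite E1; ring. ring. }
    assert (Y1b : lam 1%nat * Y 1%nat s ^ 2 <= 1) by (pose proof (HYb 1%nat s ltac:(lia)); pose proof (HG s); lra).
    assert (Y1b' : Y 1%nat s ^ 2 <= / lam 1%nat).
    { apply (Rmult_le_reg_l (lam 1%nat)); auto. rewrite Rinv_r; lra. }
    assert (Hpos : 0 <= X 0%nat s ^ 2 * / Y 1%nat s ^ 2 * exp (1 / 2 * s)).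
    { apply Rmult_le_pos. apply Rmult_le_pos. apply pow2_ge_0. left; apply Rinv_0_lt_compat; nra. left; apply exp_pos. }
    assert (Hee : 0 <= exp (-1/4 * s) ^ 2) by apply pow2_ge_0.
    assert (HX2' : X 0%nat s ^ 2 <= (K * exp (-1/4 * s)) ^ 2).
    { rewrite E2. unfold K. rewrite Rpow_mult_distr, pow2_sqrt.
      2: { apply Rdiv_le_0_compat; lra. }
      unfold q in Hq0 |- *. unfold Rdiv.
      rewrite <- Rmult_assoc. apply Rmult_le_compat_r; auto.
      apply Rmult_le_compat; [exact Hpos|apply pow2_ge_0|exact Hqs|exact Y1b']. }
    rewrite <- (pow2_abs (X 0%nat s)) in HX2'. pose proof (Rabs_pos (X 0%nat s)).
    assert (0 <= K * exp (-1/4 * s)) by (apply Rmult_le_pos; auto; left; apply exp_pos). nra. }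
  assert (Hsumc : sumr r c = n - 1) by lra.
  assert (Hcd : forall i, (1 <= i < r)%nat -> c i = sqrt (INR (d i)) * sqrt (INR (d i))).
  { intros i Hi. unfold c. destruct (Nat.eqb_spec i 0); [lia|]. symmetry; apply Hsd; auto. }
  set (Lam := fun s => sumr r (fun i => c i * ln (Y i s))).
  assert (HdLam : forall s, is_derive Lam s ((n - 1) * G s - 1 + X 0%nat s)).
  { intros s. eapply deq. unfold Lam.
    apply (SL_derive (seq 0 r) (fun i t => c i * ln (Y i t)) (fun i s => c i * (dY i s * / Y i s))).
    intros i Hi. apply in_seq in Hi. apply dscal.
    assert (Hc := is_derive_comp ln (Y i) s (/ Y i s) (dY i s) (is_derive_ln _ (HY i s ltac:(lia))) (HdY i s ltac:(lia))).
    exact Hc.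
    rewrite (SL_ext _ _ (fun i => G s * c i + (-1) * (if Nat.eqb i 0 then 0 else sqrt (INR (d i)) * X i s))).
    rewrite SL_plus, !SL_scal. rewrite <- !sumr_S. rewrite Hsumc. pose proof (HH s). lra.
    intros i Hi. apply in_seq in Hi. destruct (Nat.eq_dec i 0) as [->|Hi0].
    unfold c; simpl; ring.
    rewrite (Hcd i ltac:(lia)). destruct (Nat.eqb_spec i 0); [lia|].
    pose proof (HY i s ltac:(lia)). pose proof (Hsd i ltac:(lia)) as [Hs1 _]. unfold dY. field. split; lra. }
  set (m := fun s => (1 - X 0%nat s) / (n - 1)).
  set (V := fun s => G s - X 0%nat s ^ 2 - (1 - X 0%nat s) ^ 2 / (n - 1)).
  assert (HVid : forall s, V s = sumr r (fun j => if Nat.eqb j 0 then 0 else (X j s - m s * sqrt (INR (d j))) ^ 2)).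
  { intros s. rewrite sumr_S.
    rewrite (SL_ext _ _ (fun j => (if Nat.eqb j 0 then 0 else X j s ^ 2) + ((-2 * m s) * (if Nat.eqb j 0 then 0 else sqrt (INR (d j)) * X j s) + m s ^ 2 * c j))).
    rewrite !SL_plus, !SL_scal. rewrite <- !sumr_S. rewrite Hsumc.
    assert (HG0 : G s = X 0%nat s ^ 2 + sumr r (fun j => if Nat.eqb j 0 then 0 else X j s ^ 2)).
    { unfold G, Gfun. apply sumr_split0; lia. }
    pose proof (HH s). unfold V, m. field_simplify_eq; [|lra]. rewrite HG0.
    replace (sumr r (fun i => if Nat.eqb i 0 then 0 else sqrt (INR (d i)) * X i s)) with (1 - X 0%nat s) by lra. ring.
    intros j Hj. apply in_seq in Hj. destruct (Nat.eq_dec j 0) as [->|Hj0].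
    unfold c; simpl; ring.
    rewrite (Hcd j ltac:(lia)). destruct (Nat.eqb_spec j 0); [lia|]. ring. }
  assert (HVi : forall i s, (1 <= i < r)%nat -> (X i s - m s * sqrt (INR (d i))) ^ 2 <= V s).
  { intros i s Hi. rewrite HVid. eapply Rle_trans; [|apply (SL_single _ (fun j => if Nat.eqb j 0 then 0 else (X j s - m s * sqrt (INR (d j))) ^ 2) i)].
    destruct (Nat.eqb_spec i 0); [lia|]. lra. apply sumr_In; lia.
    intros j _. destruct (Nat.eqb j 0); [lra|apply pow2_ge_0]. }
  assert (HV0 : forall s, 0 <= V s).
  { intros s. eapply Rle_trans; [|apply (HVi 1%nat s ltac:(lia))]. apply pow2_ge_0. }
  assert (HdLamV : forall s, (n - 1) * G s - 1 + X 0%nat s = (n - 1) * V s + n * X 0%nat s ^ 2 - X 0%nat s).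
  { intros s. unfold V. field. lra. }
  set (M := fun t => Lam t + (-4 * K) * exp (-1/4 * t)).
  set (m1 := fun t => (n - 1) * G t - 1 + X 0%nat t + K * exp (-1/4 * t)).
  assert (HdM : forall t, is_derive M t (m1 t)).
  { intros t. eapply deq. apply dplus. apply HdLam. apply dscal. apply Hexp. unfold m1. lra. }
  assert (Hexp1 : forall t, 0 <= t -> exp (-1/4 * t) <= 1).
  { intros t Ht. destruct (Req_dec t 0) as [->|Ht0]. rewrite Rmult_0_r, exp_0; lra.
    rewrite <- exp_0. left; apply exp_increasing. lra. }
  assert (Hm1 : forall t, 0 <= t -> (n - 1) * V t <= m1 t).
  { intros t Ht. unfold m1. rewrite HdLamV. pose proof (HX0 t Ht) as A1. pose proof (Rle_abs (X 0%nat t)) as A2.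
    assert (0 <= n * X 0%nat t ^ 2) by (apply Rmult_le_pos; [lra|apply pow2_ge_0]). nra. }
  assert (HMmono : forall a b, 0 <= a <= b -> M a <= M b).
  { intros a b Hab. apply (mono M m1 a b HdM); [|lra]. intros t Ht.
    pose proof (Hm1 t ltac:(lra)). pose proof (HV0 t). nra. }
  assert (Hlny : forall y, 0 < y -> ln y < y).
  { intros y Hy. destruct (Req_dec (ln y) 0) as [E|E]. lra. pose proof (exp_ineq1 (ln y) E).
    rewrite exp_ln in H; lra. }
  set (U := sumr r (fun i => c i * (1 + / lam i))).
  assert (HMb : forall s, 0 <= s -> M s <= U).
  { intros s Hs. unfold M. assert (Lam s <= U).
    { unfold Lam, U. rewrite !sumr_S. apply SL_le. intros i Hi. apply in_seq in Hi.
      destruct (Nat.eq_dec i 0) as [->|Hi0]. unfold c; simpl; lra.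
      apply Rmult_le_compat_l; auto. pose proof (HY i s ltac:(lia)). pose proof (Hlny _ H).
      pose proof (HYb i s ltac:(lia)). pose proof (HG s). pose proof (Hlam i ltac:(lia)).
      assert (Y i s ^ 2 <= / lam i). { apply (Rmult_le_reg_l (lam i)); auto. rewrite Rinv_r; lra. }
      nra. }
    pose proof (exp_pos (-1/4 * s)). nra. }
  destruct (mono_conv M U HMmono HMb) as [lM HlM].
  set (m2 := fun t => (n - 1) * dG t + dX 0%nat t + K * (-1/4 * exp (-1/4 * t))).
  assert (Hdm1 : forall t, is_derive m1 t (m2 t)).
  { intros t. eapply deq.
    apply (is_derive_ext (fun t => (n - 1) * G t + (-1) + X 0%nat t + K * exp (-1/4 * t))).
    intros; unfold m1; lra.
    apply dplus. apply dplus. apply dplus. apply dscal, HdG. apply dconst. apply HdX; lia. apply dscal, Hexp.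
    unfold m2. lra. }
  assert (Hm2 : forall t, 0 <= t -> Rabs (m2 t) <= (n - 1) * (4 * INR r) + 2 + K).
  { intros t Ht. unfold m2. eapply Rle_trans. apply Rabs_triang. eapply Rle_trans.
    apply Rplus_le_compat_r. apply Rabs_triang.
    pose proof (HdGb t). pose proof (HdXb 0%nat t ltac:(lia)). pose proof (Hexp1 t Ht). pose proof (exp_pos (-1/4 * t)).
    assert (Rabs ((n - 1) * dG t) <= (n - 1) * (4 * INR r)).
    { rewrite Rabs_mult, Rabs_right by lra. apply Rmult_le_compat_l; lra. }
    assert (Rabs (K * (-1 / 4 * exp (-1 / 4 * t))) <= K).
    { rewrite Rabs_mult, (Rabs_right K) by lra. rewrite Rabs_left1 by nra. nra. }
    lra. }
  pose proof (barbalat M m1 m2 _ lM HdM Hdm1 Hm2 HlM) as Hm1c.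
  assert (HVc : conv V 0).
  { apply (conv_squeeze0 V (fun s => / (n - 1) * m1 s)).
    intros s Hs. rewrite Rabs_right by (apply Rle_ge; auto). pose proof (Hm1 s Hs).
    apply (Rmult_le_reg_l (n - 1)). lra. rewrite <- Rmult_assoc, Rinv_r, Rmult_1_l; lra.
    eapply conv_eq. apply conv_mult. apply conv_const. apply Hm1c. ring. }
  assert (HX0c : conv (X 0%nat) 0).
  { apply (conv_squeeze0 _ (fun s => K * exp (-1/4 * s))). auto.
    intros e He. exists (4 * K / e). intros s Hs. rewrite Rminus_0_r.
    assert (0 <= s) by (assert (0 <= 4 * K / e) by (apply Rdiv_le_0_compat; lra); lra).
    pose proof (exp_pos (-1/4 * s)). rewrite Rabs_right by nra.
    assert (E : exp (-1/4 * s) * exp (1/4 * s) = 1) by (rewrite <- exp_plus; replace (-1/4 * s + 1/4 * s) with 0 by lra; apply exp_0).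
    assert (s / 4 < exp (1/4 * s)).
    { destruct (Req_dec (1/4 * s) 0) as [E0|E0]. rewrite E0, exp_0. lra.
      pose proof (exp_ineq1 _ E0). lra. }
    assert (K <= e * (s / 4)).
    { apply (Rmult_le_reg_l (/ e)). apply Rinv_0_lt_compat; lra.
      replace (/ e * (e * (s / 4))) with (s / 4) by (field; lra).
      unfold Rdiv in Hs. nra. }
    assert (K * exp (-1/4 * s) * exp (1/4 * s) < e * exp (1/4 * s)).
    { rewrite Rmult_assoc, E. nra. }
    pose proof (exp_pos (1/4 * s)). nra. }
  assert (HGc : conv G (1 / (n - 1))).
  { apply (conv_ext (fun s => V s + X 0%nat s * X 0%nat s + (1 + (-1) * X 0%nat s) * (1 + (-1) * X 0%nat s) * / (n - 1))).
    intros s _. unfold V. field. lra.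
    eapply conv_eq. apply conv_plus. apply conv_plus. apply HVc. apply conv_mult; apply HX0c.
    apply conv_mult. apply conv_mult.
    1,2: apply conv_plus; [apply conv_const| apply conv_mult; [apply conv_const|apply HX0c]].
    apply conv_const. field. lra. }
  split. apply conv_is_lim. exact HX0c.
  intros i Hi. pose proof (Hsd i Hi) as [Hs1 Hs2]. pose proof (Hlam i Hi) as Hli.
  assert (HXic : conv (X i) (sqrt (INR (d i)) / (n - 1))).
  { apply (conv_ext (fun s => (X i s - m s * sqrt (INR (d i))) + (1 + (-1) * X 0%nat s) * / (n - 1) * sqrt (INR (d i)))).
    intros s _. unfold m. field. lra.
    eapply conv_eq. apply conv_plus.
    apply (conv_sq0 _ V). intros s _. apply HVi; auto. apply HVc.
    apply conv_mult. apply conv_mult. apply conv_plus. apply conv_const. apply conv_mult; [apply conv_const|apply HX0c].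
    apply conv_const. apply conv_const. field. lra. }
  split. apply conv_is_lim. exact HXic.
  set (g2 := fun s => dX i s * (G s + -1) + X i s * (dG s + 0) + (lam i / sqrt (INR (d i))) * (dY i s * Y i s + Y i s * dY i s)).
  assert (Hdg : forall t, is_derive (dX i) t (g2 t)).
  { intros t. apply (dext (fun s => X i s * (G s + -1) + (lam i / sqrt (INR (d i))) * (Y i s * Y i s))).
    intros s. unfold dX. field. lra.
    apply (dplus (fun s => X i s * (G s + -1)) (fun s => lam i / sqrt (INR (d i)) * (Y i s * Y i s))).
    apply (dmult (X i) (fun s => G s + -1)). apply HdX; lia. apply (dplus G (fun _ => -1)). apply HdG. apply dconst.
    apply (dscal (fun s => Y i s * Y i s)). apply (dmult (Y i) (Y i)); apply HdY; lia. }
  assert (Hg2 : forall t, 0 <= t -> Rabs (g2 t) <= 2 + 4 * INR r + 4).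
  { intros t _. unfold g2. pose proof (HG t) as HGt. pose proof (HXb i t ltac:(lia)) as HXt.
    pose proof (HdXb i t ltac:(lia)) as HdXt. pose proof (HdGb t) as HdGt.
    pose proof (HYb i t Hi) as HYt. pose proof (HY i t ltac:(lia)) as HYp.
    assert (E : lam i / sqrt (INR (d i)) * (dY i t * Y i t + Y i t * dY i t)
               = 2 * (lam i * Y i t ^ 2) * ((G t - X i t / sqrt (INR (d i))) / sqrt (INR (d i)))).
    { unfold dY. field. lra. }
    rewrite E.
    assert (A1 : Rabs (dX i t * (G t + -1)) <= 2 * 1).
    { apply abs_mult_le; auto. rewrite Rabs_left1; lra. }
    assert (A2 : Rabs (X i t * (dG t + 0)) <= 1 * (4 * INR r)).
    { apply abs_mult_le; auto. rewrite Rplus_0_r; auto. }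
    assert (A3 : Rabs (2 * (lam i * Y i t ^ 2) * ((G t - X i t / sqrt (INR (d i))) / sqrt (INR (d i)))) <= (2 * 1) * 2).
    { apply abs_mult_le. apply abs_mult_le. rewrite Rabs_right; lra.
      assert (0 <= lam i * Y i t ^ 2) by (apply Rmult_le_pos; [lra|apply pow2_ge_0]).
      rewrite Rabs_right; lra.
      eapply Rle_trans. apply abs_div_le. lra.
      eapply Rle_trans. apply Rabs_triang. rewrite Rabs_Ropp.
      pose proof (abs_div_le (X i t) (sqrt (INR (d i))) ltac:(lra)).
      rewrite (Rabs_right (G t)) by lra. lra. }
    eapply Rle_trans. apply Rabs_triang. eapply Rle_trans. apply Rplus_le_compat_r. apply Rabs_triang. lra. }
  pose proof (barbalat (X i) (dX i) g2 _ _ (fun t => HdX i t ltac:(lia)) Hdg Hg2 HXic) as HdXc.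
  assert (HY2c : conv (fun s => Y i s ^ 2)
     (sqrt (INR (d i)) / lam i * (0 + (-1) * (sqrt (INR (d i)) / (n - 1) * (1 / (n - 1) + -1))))).
  { apply (conv_ext (fun s => sqrt (INR (d i)) / lam i * (dX i s + (-1) * (X i s * (G s + -1))))).
    intros s _. unfold dX. field. lra.
    apply conv_mult. apply conv_const. apply conv_plus. auto. apply conv_mult. apply conv_const.
    apply conv_mult. auto. apply conv_plus. auto. apply conv_const. }
  apply conv_is_lim. fold n.
  assert (HT : 0 <= sqrt ((n - 2) / lam i) * (sqrt (INR (d i)) / (n - 1))).
  { apply Rmult_le_pos. apply sqrt_pos. apply Rdiv_le_0_compat; lra. }
  apply (conv_ext (fun s => sqrt (Y i s ^ 2))). intros s _. apply sqrt_pow2. pose proof (HY i s ltac:(lia)); lra.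
  eapply conv_eq. apply conv_sqrt; [|exact HY2c].
  { assert (0 <= sqrt (INR (d i)) * sqrt (INR (d i)) / lam i * (1 / (n - 1)) * (1 - 1 / (n - 1))).
    { apply Rmult_le_pos. apply Rmult_le_pos. apply Rdiv_le_0_compat; [nra|lra].
      apply Rdiv_le_0_compat; lra. assert (1 / (n - 1) <= 1/2). apply Rmult_le_compat_l; [lra|]. apply Rinv_le_contravar; lra. lra. }
    replace (sqrt (INR (d i)) / lam i * (0 + -1 * (sqrt (INR (d i)) / (n - 1) * (1 / (n - 1) + -1))))
      with (sqrt (INR (d i)) * sqrt (INR (d i)) / lam i * (1 / (n - 1)) * (1 - 1 / (n - 1))) by (field; split; lra).
    auto. }
  rewrite <- (sqrt_pow2 _ HT). f_equal. rewrite Rpow_mult_distr, pow2_sqrt.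
  field. split; lra. apply Rdiv_le_0_compat; lra.
Qed.
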